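(* For any $\xi>0$ and $\epsilon>0$, there exists an $\epsilon$-differentially private (central model) $\left(1+\xi,\ O_\xi\!\left(\frac{m^4}{\epsilon n}\right)\right)$-approximation algorithm for the rank aggregation problem, i.e., one whose additive error is at most $C_\xi \frac{m^4}{\epsilon n}$ for a constant $C_\xi$ depending only on $\xi$.
   Context: Items are $[m]=\{1,\dots,m\}$; $\mathbb{S}_m$ is the set of rankings (permutations) of $[m]$, $\pi(j)$ being the position of item $j$. The Kendall tau distance is $K(\pi_1,\pi_2)=|\{(i,j):\pi_1(i)<\pi_1(j),\ \pi_2(i)>\pi_2(j)\}|$. An input is a list $\Pi=\{\pi_1,\dots,\pi_n\}$ of $n$ rankings. Define $\bar K(\sigma,\Pi)=\frac1n\sum_k K(\sigma,\pi_k)$ and $\mathrm{OPT}(\Pi)=\min_\sigma\bar K(\sigma,\Pi)$. A randomized algorithm is an $(\alpha,\beta)$-approximation algorithm for rank aggregation if for every input $\Pi$ its output $\sigma$ satisfies $\mathbb{E}[\bar K(\sigma,\Pi)]\le\alpha\,\mathrm{OPT}(\Pi)+\beta$. Two inputs are neighboring if they differ in a single ranking; an algorithm $\mathcal{M}$ is $\epsilon$-DP (central model) if for all neighboring $\Pi,\Pi'$ and all output sets $S$, $\Pr[\mathcal{M}(\Pi)\in S]\le e^{\epsilon}\Pr[\mathcal{M}(\Pi')\in S]$. *)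

(* Defs.v *)
From HB Require Import structures.
From mathcomp Require Import all_boot all_order all_algebra perm.
From mathcomp Require Import reals.
From mathcomp Require Import sequences exp.
Set Implicit Arguments. Unset Strict Implicit. Unset Printing Implicit Defensive.
Import Order.TTheory GRing.Theory Num.Theory.
Local Open Scope ring_scope.

(* A ranking of the items 'I_m is a permutation; (pi j) is the position of item j. *)
Notation ranking m := {perm 'I_m}.

Definition kendall (m : nat) (p1 p2 : ranking m) : nat :=
  #|[set ij : 'I_m * 'I_m | (p1 ij.1 < p1 ij.2)%N && (p2 ij.2 < p2 ij.1)%N]|.

Definition avgK (R : realType) (m n : nat) (s : ranking m) (Pi : n.-tuple (ranking m)) : R :=
  (\sum_(k < n) (kendall s (tnth Pi k))%:R) / n%:R.

Definition OPT (R : realType) (m n : nat) (Pi : n.-tuple (ranking m)) : R :=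
  \big[Num.min/avgK R 1 Pi]_(s : ranking m) avgK R s Pi.

Definition is_dist (R : realType) (m : nat) (P : {ffun ranking m -> R}) : Prop :=
  (forall s, 0 <= P s) /\ \sum_s P s = 1.

(* A randomized algorithm on inputs of n rankings over m items: maps an input to
   the distribution of its output. *)
Definition rand_alg (R : realType) (m n : nat) :=
  n.-tuple (ranking m) -> {ffun ranking m -> R}.

Definition prob (R : realType) (m : nat) (P : {ffun ranking m -> R}) (S : {set ranking m}) : R :=
  \sum_(s in S) P s.

Definition expected_avgK (R : realType) (m n : nat) (P : {ffun ranking m -> R})
  (Pi : n.-tuple (ranking m)) : R :=
  \sum_s P s * avgK R s Pi.

Definition neighboring (m n : nat) (Pi Pi' : n.-tuple (ranking m)) : Prop :=
  exists i : 'I_n, forall j : 'I_n, j != i -> tnth Pi j = tnth Pi' j.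

Definition is_DP (R : realType) (eps : R) (m n : nat) (M : rand_alg R m n) : Prop :=
  forall Pi Pi', neighboring Pi Pi' ->
    forall S : {set ranking m}, prob (M Pi) S <= expR eps * prob (M Pi') S.

Definition is_approx (R : realType) (alpha beta : R) (m n : nat) (M : rand_alg R m n) : Prop :=
  forall Pi, expected_avgK (M Pi) Pi <= alpha * OPT R Pi + beta.

(* Main.v *)
Require Import Defs.
From HB Require Import structures.
From mathcomp Require Import all_boot all_order all_algebra perm.
From mathcomp Require Import reals.
From mathcomp Require Import sequences exp.
From mathcomp Require Import ring lra.
Import Order.TTheory GRing.Theory Num.Theory.
Local Open Scope ring_scope.

Lemma fact_le_exp m : (m`! <= m ^ m)%N.
Proof.
elim: m => // m IH; rewrite factS expnS leq_mul //.
apply: leq_trans IH _.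
case: m => [//|m]; rewrite leq_exp2r //.
Qed.

Lemma kendall_le m (p1 p2 : ranking m) : (kendall p1 p2 <= m * m)%N.
Proof.
rewrite /kendall; apply: leq_trans (max_card _) _.
by rewrite card_prod card_ord.
Qed.

Lemma avgK_ge0 (R : realType) m n (s : ranking m) (Pi : n.-tuple (ranking m)) :
  0 <= avgK R s Pi.
Proof. by rewrite /avgK divr_ge0 // sumr_ge0. Qed.

Lemma OPT_le (R : realType) m n (s : ranking m) (Pi : n.-tuple (ranking m)) :
  OPT R Pi <= avgK R s Pi.
Proof. exact: bigmin_le. Qed.

Lemma OPT_ex (R : realType) m n (Pi : n.-tuple (ranking m)) :
  exists s, OPT R Pi = avgK R s Pi.
Proof.
rewrite /OPT; apply: (big_ind (fun v => exists s, v = avgK R s Pi)).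
- by exists 1%g.
- move=> x y [s ->] [t ->].
  rewrite /Num.min; case: ltP => _; [by exists s | by exists t].
- by move=> s _; exists s.
Qed.

Lemma avgK_diff (R : realType) m n (s : ranking m) (Pi Pi' : n.-tuple (ranking m)) :
  (0 < n)%N -> neighboring Pi Pi' ->
  avgK R s Pi - avgK R s Pi' <= (m * m)%:R / n%:R.
Proof.
move=> n0 [i hi]; rewrite /avgK -mulrBl ler_pM2r ?invr_gt0 ?ltr0n //.
rewrite -sumrB (bigD1 i) //= big1 ?addr0; last first.
  by move=> j /hi ->; rewrite subrr.
rewrite lerBlDr; apply: (@le_trans _ _ (m * m)%:R).
  by rewrite ler_nat kendall_le.
by rewrite lerDl.
Qed.

Lemma neighboring_sym {m n} {Pi Pi' : n.-tuple (ranking m)} :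
  neighboring Pi Pi' -> neighboring Pi' Pi.
Proof. by move=> [i hi]; exists i => j /hi ->. Qed.
Lemma key_bound (R : realType) (y K : R) : 0 <= K -> K < y ->
  y * expR (- y) <= 2 * expR (-(K / 2)).
Proof.
move=> K0 Ky.
have e0 : expR (- y) = expR (-(y/2)) * expR (-(y/2)).
  by rewrite -expRD; congr expR; lra.
have e1 : y / 2 <= expR (y / 2) by apply: le_trans (expR_ge1Dx _); lra.
have e2 : expR (y/2) * expR (-(y/2)) = 1 by rewrite -expRD subrr expR0.
have e3 : expR (-(y/2)) <= expR (-(K/2)) by rewrite ler_expR; lra.
have a0 := expR_gt0 (-(y/2)).
rewrite e0 mulrA; apply: ler_pM => //; first by apply: mulr_ge0; lra.
  by apply: ltW.
nra.
Qed.

Lemma util (R : realType) (T : finType) (x : T -> R) (bt K : R) :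
  0 < bt -> 0 <= K -> (forall s, 0 <= x s) -> (exists s0, x s0 = 0) ->
  #|T|%:R * expR (-(K/2)) <= 1 ->
  \sum_s (expR (-(bt * x s)) / \sum_t expR (-(bt * x t))) * x s <= (K+2)/bt.
Proof.
move=> bt0 K0 x0 [s0 hs0] hcard.
set Z := \sum_t expR (-(bt * x t)).
have Z1 : 1 <= Z.
  rewrite /Z (bigD1 s0) //= hs0 mulr0 oppr0 expR0 lerDl sumr_ge0 // => t _.
  exact: ltW (expR_gt0 _).
have Z0 : 0 < Z by apply: lt_le_trans Z1.
have pt : forall s, (expR (-(bt * x s)) / Z) * x s <=
    (K / bt) * (expR (-(bt * x s)) / Z) + (2 / bt) * expR (-(K/2)).
  move=> s; have w0 := expR_gt0 (-(bt * x s)).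
  case: (leP (bt * x s) K) => h.
  - rewrite mulrC -[X in X <= _]addr0; apply: lerD.
      apply: ler_wpM2r; first by rewrite divr_ge0 // ltW.
      by rewrite ler_pdivlMr // mulrC.
    by rewrite mulr_ge0 ?divr_ge0 // ?ltW // expR_gt0.
  - rewrite -[X in X <= _]add0r; apply: lerD.
      by rewrite mulr_ge0 ?divr_ge0 // ?ltW.
    apply: (@le_trans _ _ (expR (-(bt * x s)) * x s)).
      apply: ler_wpM2r => //; rewrite ler_pdivrMr //.
      by rewrite ler_peMr // ltW.
    have := @key_bound _ _ _ K0 h.
    rewrite [X in X <= _ -> _](_ : _ = bt * (expR (- (bt * x s)) * x s)); last first.
      by rewrite -mulrA [x s * _]mulrC.
    by rewrite mulrAC ler_pdivlMr // mulrC.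
apply: le_trans (ler_sum _ (fun s _ => pt s)) _.
rewrite big_split /= -mulr_sumr -mulr_suml -/Z divff ?gt_eqF // mulr1 sumr_const.
rewrite (mulrDl K 2) lerD2l -mulrnAr -mulr_natl ler_piMr //.
  by rewrite mulr1 divr_ge0 // ltW.
by rewrite mulr1 -mulr_natl.
Qed.

Definition bfun {R : realType} (eps : R) (m n : nat) : R :=
  eps * n%:R / (2 * (m * m)%:R).

Definition wt {R : realType} {m n} (b : R) (Pi : n.-tuple (ranking m)) (s : ranking m) : R :=
  expR (- (b * avgK R s Pi)).

Definition mech {R : realType} (eps : R) m n : rand_alg R m n :=
  fun Pi => [ffun s => wt (bfun eps m n) Pi s / \sum_t wt (bfun eps m n) Pi t].

Lemma mech_dist (R : realType) (eps : R) m n Pi : is_dist (mech eps m n Pi).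
Proof.
have Z0 : 0 < \sum_t wt (bfun eps m n) Pi t.
  rewrite (bigD1 (1%g : ranking m)) //= ltr_pwDl ?expR_gt0 // sumr_ge0 // => t _.
  exact: ltW (expR_gt0 _).
split.
  by move=> s; rewrite ffunE divr_ge0 // ?ltW // expR_gt0.
under eq_bigr do rewrite ffunE.
by rewrite -mulr_suml divff // gt_eqF.
Qed.

Lemma bfun_ge0 (R : realType) (eps : R) m n : 0 < eps -> 0 <= bfun eps m n.
Proof. by move=> e0; rewrite /bfun divr_ge0 // mulr_ge0 // ltW. Qed.

Lemma bnd (R : realType) (eps : R) m n : 0 < eps -> (0 < n)%N ->
  bfun eps m n * ((m * m)%:R / n%:R) <= eps / 2.
Proof.
move=> e0 n0; case: m => [|m].
  by rewrite mul0n mul0r mulr0 divr_ge0 // ltW.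
have hm : ((m.+1 * m.+1)%:R : R) != 0 by rewrite pnatr_eq0 muln_eq0.
have hn : (n%:R : R) != 0 by rewrite pnatr_eq0 -lt0n.
rewrite /bfun le_eqVlt; apply/orP; left; apply/eqP; field.
rewrite hn /=; have := ler0n R m; move=> hh; apply/negP => /eqP; lra.
Qed.

Lemma wbound (R : realType) (eps : R) m n (Pi Pi' : n.-tuple (ranking m)) s :
  0 < eps -> (0 < n)%N -> neighboring Pi Pi' ->
  wt (bfun eps m n) Pi s <= expR (eps / 2) * wt (bfun eps m n) Pi' s.
Proof.
move=> e0 n0 h; rewrite /wt -expRD ler_expR.
have d := @avgK_diff R m n s Pi' Pi n0 (neighboring_sym h).
have := ler_wpM2l (@bfun_ge0 R eps m n e0) d.
have := @bnd R eps m n e0 n0.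
rewrite mulrBr; lra.
Qed.

Lemma ratio_aux (R : realFieldType) (w w' Z Z' e : R) : 0 < Z -> 0 < Z' ->
  0 <= w' -> 0 <= e -> w <= e * w' -> Z' <= e * Z -> w / Z <= (e * e) * (w' / Z').
Proof.
move=> Z0 Z'0 w0 e0 h1 h2; rewrite ler_pdivrMr //.
set u := w' / Z'.
have hu : w' = u * Z' by rewrite /u mulrVK // unitfE gt_eqF.
have u0 : 0 <= u by rewrite divr_ge0 // ltW.
have eu : 0 <= e * u by rewrite mulr_ge0.
rewrite hu in h1; nra.
Qed.

Lemma mech_DP (R : realType) (eps : R) m n : 0 < eps -> (0 < n)%N ->
  is_DP eps (mech eps m n).
Proof.
move=> e0 n0 Pi Pi' h S.
have Zp : forall P : n.-tuple (ranking m), 0 < \sum_t wt (bfun eps m n) P t.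
  move=> P; rewrite (bigD1 (1%g : ranking m)) //= ltr_pwDl ?expR_gt0 // sumr_ge0 // => t _.
  exact: ltW (expR_gt0 _).
rewrite /prob mulr_sumr; apply: ler_sum => s _; rewrite !ffunE.
have -> : expR eps = expR (eps / 2) * expR (eps / 2) by rewrite -expRD; congr expR; lra.
apply: ratio_aux => //.
- exact: ltW (expR_gt0 _).
- exact: ltW (expR_gt0 _).
- exact: wbound.
- rewrite mulr_sumr; apply: ler_sum => t _.
  exact: wbound (neighboring_sym h).
Qed.

Lemma fact_R (R : realType) m : (m`!%:R : R) <= expR ((m * m)%:R).
Proof.
apply: (@le_trans _ _ ((m ^ m)%N%:R : R)); first by rewrite ler_nat fact_le_exp.
rewrite natrX natrM expRM_natl; apply: lerXn2r; [by rewrite nnegrE ler0n | by rewrite nnegrE ltW ?expR_gt0 |].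
by apply: le_trans (expR_ge1Dx _) ; rewrite lerDr.
Qed.

Lemma mech_approx (R : realType) (eps xi : R) m n : 0 < eps -> 0 < xi -> (0 < n)%N ->
  is_approx (1 + xi) (8 * (m%:R ^+ 4 / (eps * n%:R))) (mech eps m n).
Proof.
move=> e0 xi0 n0 Pi.
have [s0 hs0] := @OPT_ex R m n Pi.
have O0 : 0 <= OPT R Pi by rewrite hs0 avgK_ge0.
have rhs0 : 0 <= (1 + xi) * OPT R Pi + 8 * (m%:R ^+ 4 / (eps * n%:R)).
  rewrite addr_ge0 // mulr_ge0 // ?divr_ge0 ?exprn_ge0 ?ler0n ?mulr_ge0 ?ler0n // ; try lra.
case: (posnP m) => [m0|m0].
  rewrite /expected_avgK big1 // => s _.
  suff -> : avgK R s Pi = 0 by rewrite mulr0.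
  rewrite /avgK big1 ?mul0r // => k _.
  have h := @kendall_le m s (tnth Pi k).
  have e : (m * m = 0)%N by rewrite m0.
  by rewrite e leqn0 in h; rewrite (eqP h).
set O := OPT R Pi; set b := bfun eps m n.
pose x s := avgK R s Pi - O.
have ew : forall s, wt b Pi s = expR (-(b * x s)) * expR (-(b * O)).
  by move=> s; rewrite /wt -expRD; congr expR; rewrite /x mulrBr; lra.
have hP : forall s, mech eps m n Pi s = expR (-(b * x s)) / \sum_t expR (-(b * x t)).
  move=> s; rewrite ffunE -/b ew (eq_bigr _ (fun t _ => ew t)) -mulr_suml invfM mulrACA.
  by rewrite divff ?mulr1 // gt_eqF // expR_gt0.
have hE : expected_avgK (mech eps m n Pi) Pi =
    \sum_s (expR (-(b * x s)) / \sum_t expR (-(b * x t))) * x s + O.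
  rewrite /expected_avgK -[O]mul1r -(proj2 (@mech_dist R eps m n Pi)) mulr_suml -big_split /=.
  by apply: eq_bigr => s _; rewrite -hP -mulrDr /x subrK.
have M1 : 1 <= ((m * m)%:R : R) by rewrite ler1n muln_gt0 m0.
have b0 : 0 < b.
  rewrite /b /bfun divr_gt0 ?mulr_gt0 ?ltr0n //.
  by rewrite muln_gt0 m0.
have hU := @util R _ x b (2 * (m * m)%:R) b0 (ltac:(lra)).
have hx : forall s, 0 <= x s by move=> s; rewrite /x subr_ge0 /O (@OPT_le R m n s Pi).
have hx0 : exists s1, x s1 = 0 by exists s0; rewrite /x /O hs0 subrr.
have hc : (#|{perm 'I_m}|%:R : R) * expR (-(2 * (m * m)%:R / 2)) <= 1.
  rewrite card_Sn [2 * _]mulrC mulfK ?pnatr_eq0 //.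
  apply: le_trans (ler_wpM2r (ltW (expR_gt0 _)) (fact_R R m)) _.
  by rewrite -expRD subrr expR0.
rewrite hE; apply: le_trans (lerD (hU hx hx0 hc) (lexx O)) _.
have hq : 0 <= (eps * n%:R)^-1 by rewrite invr_ge0 mulr_ge0 ?ler0n // ltW.
have e1 : (2 * (m * m)%:R + 2) / b = ((2 * (m * m)%:R + 2) * (2 * (m * m)%:R)) * (eps * n%:R)^-1.
  rewrite /b /bfun; field.
  by rewrite !pnatr_eq0 -!lt0n n0 m0 gt_eqF.
have e2 : 8 * (m%:R ^+ 4 / (eps * n%:R)) = (8 * ((m * m)%:R ^+ 2)) * (eps * n%:R)^-1.
  by rewrite natrM -expr2 -exprM mulrA.
rewrite e1 e2 -/O.
set q := (eps * n%:R)^-1; set M := ((m * m)%:R : R).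
move: hq M1 O0 xi0; rewrite -/q -/M => hq M1 O0 xi0.
have O1 : 0 <= O := O0.
have h1 : 0 <= xi * O by rewrite mulr_ge0 // ltW.
have h2 : 0 <= M * ((M - 1) * q) by rewrite !mulr_ge0 // ?subr_ge0 //; lra.
rewrite expr2; nra.
Qed.

Theorem corollary1 (R : realType) (xi : R) (hxi : 0 < xi) :
  exists C : R, 0 < C /\
    forall eps : R, 0 < eps ->
      exists M : forall m n : nat, rand_alg R m n,
        forall m n : nat, (0 < n)%N ->
          (forall Pi, is_dist (M m n Pi)) /\
          is_DP eps (M m n) /\
          is_approx (1 + xi) (C * (m%:R ^+ 4 / (eps * n%:R))) (M m n).
Proof.
exists 8; split; first by [].
move=> eps e0; exists (fun m n => mech eps m n) => m n n0.
split; first by move=> Pi; exact: mech_dist.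
split; first exact: mech_DP.
exact: mech_approx.
Qed.
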